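(* Consider the following random variables, all defined on a common probability space (one draw from a superpopulation): a binary decision (plan) variable $P\in\{0,1\}$; a binary treatment at time 2, $A_2\in\{0,1\}$; real-valued outcomes $Y_1,Y_2$ with finite expectations; and, for $p^*\in\{0,1\}$, potential outcomes $Y_1^{p=p^*}, Y_2^{p=p^*}, A_2^{p=p^*}$ (values had $P$ been set to $p^*$). Suppose that: (i) $\Pr(A_2=a^* )>0$ for every $a^*\in\{0,1\}$; (ii) $A_2^{p=p^*}=p^*$ for every $p^*\in\{0,1\}$; (iii) $\mathbb{E}(Y_1^{p=1}\mid P=1)=\mathbb{E}(Y_1^{p=0}\mid P=1)$; (iv) $\mathbb{E}(Y_2^{p=0}-Y_1^{p=0}\mid P=1)=\mathbb{E}(Y_2^{p=0}-Y_1^{p=0}\mid P=0)$; (v) for each $p^*\in\{0,1\}$: $Y_1^{p=p^*}=Y_1$, $Y_2^{p=p^*}=Y_2$ and $A_2^{p=p^*}=A_2$ on the event $\{P=p^*\}$. Then \[ATT_P=\{\mathbb{E}(Y_2\mid A_2=1)-\mathbb{E}(Y_1\mid A_2=1)\}-\{\mathbb{E}(Y_2\mid A_2=0)-\mathbb{E}(Y_1\mid A_2=0)\},\] where $ATT_P=\mathbb{E}(Y_2^{p=1}-Y_2^{p=0}\mid P=1)$.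
   Context: Difference-in-differences setting with two time points. Superscripts denote potential outcomes (counterfactual values under a hypothetical intervention fixing $P$ to the indicated value). $P$ represents the decision/plan to implement a policy, $A_2$ its implementation at time 2 (no unit is treated at time 1), and $Y_1,Y_2$ the outcome measured at times 1 and 2. *)

(* Defs.v *)
From HB Require Import structures.
From mathcomp Require Import all_boot all_order all_algebra.
From mathcomp Require Import all_classical all_reals all_analysis.
Set Implicit Arguments. Unset Strict Implicit. Unset Printing Implicit Defensive.
Import Order.TTheory GRing.Theory Num.Theory.
Local Open Scope classical_set_scope.
Local Open Scope ring_scope.

Definition cond_exp d (T : measurableType d) (R : realType)
  (Pr : probability T R) (X : T -> R) (B : set T) : R :=
  fine (\int[Pr]_(w in B) (X w)%:E) / fine (Pr B).

Definition evt (T : Type) (R : realType) (V : T -> R) (v : R) : set T :=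
  [set w | V w = v].

(* Main.v *)
Require Import Defs.
From HB Require Import structures.
From mathcomp Require Import all_boot all_order all_algebra.
From mathcomp Require Import all_classical all_reals all_analysis.
From mathcomp Require Import measurable_realfun lra.
Import Order.TTheory GRing.Theory Num.Theory.
Local Open Scope classical_set_scope.
Local Open Scope ring_scope.
Set Implicit Arguments. Unset Strict Implicit.

Lemma ae_and4 {U : Type} {F : set_system U} {FF : Filter F} {P1 P2 P3 P4 Q : set U} :
  (forall x, P1 x -> P2 x -> P3 x -> P4 x -> Q x) ->
  F P1 -> F P2 -> F P3 -> F P4 -> F Q.
Proof.
move=> h f1 f2 f3 f4.
apply: filterS (filterI (filterI f1 f2) (filterI f3 f4)) => x [[a b] [c e]].
exact: h.
Qed.

Section Helpers.
Context (d : measure_display) (T : measurableType d) (R : realType)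
  (Pr : probability T R).

Lemma mevt (V : T -> R) : measurable_fun setT V -> forall v, measurable (evt V v).
Proof.
move=> mV v; have := mV measurableT [set v] (measurable_set1 v).
by rewrite setTI.
Qed.

Lemma cond_expB (X Y : T -> R) (B : set T) : measurable B ->
  Pr.-integrable setT (EFin \o X) -> Pr.-integrable setT (EFin \o Y) ->
  cond_exp Pr (X \- Y) B = cond_exp Pr X B - cond_exp Pr Y B.
Proof.
move=> mB iX iY.
have iXB := integrableS measurableT mB (subsetT B) iX.
have iYB := integrableS measurableT mB (subsetT B) iY.
rewrite /cond_exp -mulrBl; congr (_ / _).
rewrite -fineB; [|exact: integrable_fin_num|exact: integrable_fin_num].
rewrite -integralB_EFin //.
Qed.

Lemma cond_exp_fun (X Y : T -> R) (B : set T) : measurable B ->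
  measurable_fun setT (EFin \o X : T -> \bar R) -> measurable_fun setT (EFin \o Y : T -> \bar R) ->
  {ae Pr, forall w, B w -> X w = Y w} ->
  cond_exp Pr X B = cond_exp Pr Y B.
Proof.
move=> mB mX mY ae; rewrite /cond_exp; congr (fine _ / _).
apply: ae_eq_integral => //.
- exact: (measurable_funS measurableT (subsetT _) mX).
- exact: (measurable_funS measurableT (subsetT _) mY).
- by apply: filterS ae => w h Bw /=; rewrite (h Bw).
Qed.

Lemma cond_exp_set (X : T -> R) (A B : set T) : measurable A -> measurable B ->
  measurable_fun setT (EFin \o X : T -> \bar R) ->
  {ae Pr, forall w, A w = B w} ->
  cond_exp Pr X A = cond_exp Pr X B.
Proof.
move=> mA mB mX ae.
have key : forall f : T -> \bar R, measurable_fun setT f ->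
    (\int[Pr]_(x in A) f x = \int[Pr]_(x in B) f x)%E.
  move=> f mf; rewrite (integral_mkcond A) (integral_mkcond B).
  have mfA : measurable_fun setT (f \_ A).
    exact: (proj1 (measurable_restrictT f mA) (measurable_funTS mf)).
  have mfB : measurable_fun setT (f \_ B).
    exact: (proj1 (measurable_restrictT f mB) (measurable_funTS mf)).
  apply: (ae_eq_integral _ _ measurableT mfA mfB).
  apply: filterS ae => w h _.
  have E : (w \in A) = (w \in B) by apply/idP/idP; rewrite !in_setE h.
  by rewrite /patch E.
rewrite /cond_exp (key _ mX).
have -> : Pr A = Pr B.
  have := key (cst 1%E) (measurable_cst _).
  by rewrite !integral_cst // !mul1e.
by [].
Qed.

End Helpers.

Theorem proposition2 (d : measure_display) (T : measurableType d) (R : realType)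
  (Pr : probability T R)
  (P A2 Y1 Y2 : T -> R)
  (Y1p Y2p A2p : bool -> T -> R)
  (mP : measurable_fun setT P) (mA2 : measurable_fun setT A2)
  (P01 : forall w, P w = 0 \/ P w = 1)
  (A201 : forall w, A2 w = 0 \/ A2 w = 1)
  (iY1 : Pr.-integrable setT (EFin \o Y1))
  (iY2 : Pr.-integrable setT (EFin \o Y2))
  (iY1p : forall b, Pr.-integrable setT (EFin \o Y1p b))
  (iY2p : forall b, Pr.-integrable setT (EFin \o Y2p b))
  (mA2p : forall b, measurable_fun setT (A2p b))
  (* (i) positivity *)
  (H1 : forall a : bool, (0 < Pr (evt A2 a%:R))%E)
  (* (ii) A_2^{p=p*} = p* *)
  (H2 : forall b : bool, {ae Pr, forall w, A2p b w = b%:R})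
  (* (iii) *)
  (H3 : cond_exp Pr (Y1p true) (evt P 1) = cond_exp Pr (Y1p false) (evt P 1))
  (* (iv) parallel trends *)
  (H4 : cond_exp Pr (Y2p false \- Y1p false) (evt P 1)
        = cond_exp Pr (Y2p false \- Y1p false) (evt P 0))
  (* (v) consistency *)
  (H5 : forall b : bool, {ae Pr, forall w, P w = b%:R ->
          [/\ Y1p b w = Y1 w, Y2p b w = Y2 w & A2p b w = A2 w]}) :
  cond_exp Pr (Y2p true \- Y2p false) (evt P 1)
  = (cond_exp Pr Y2 (evt A2 1) - cond_exp Pr Y1 (evt A2 1))
    - (cond_exp Pr Y2 (evt A2 0) - cond_exp Pr Y1 (evt A2 0)).
Proof.
have aeAP : forall v, {ae Pr, forall w, evt A2 v w = evt P v w}.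
  move=> v.
  apply: (ae_and4 _ (H2 true) (H2 false) (H5 true) (H5 false)) => w h2t h2f h5t h5f.
  rewrite /evt /=.
  have -> : A2 w = P w.
    case: (P01 w) => Pw.
    - by case: (h5f Pw) => _ _ <-; rewrite h2f Pw.
    - by case: (h5t Pw) => _ _ <-; rewrite h2t Pw.
  by [].
have mi := fun (X : T -> R) (iX : Pr.-integrable setT (EFin \o X)) =>
  measurable_int _ iX.
have mA := mevt mA2; have mPe := mevt mP.
rewrite !(cond_exp_set (mA _) (mPe _) _ (aeAP _)); try (first [exact: (mi _ iY1) | exact: (mi _ iY2)]).
rewrite (@cond_exp_fun _ _ _ _ Y2 (Y2p true) (evt P 1) (mPe _) (mi _ iY2) (mi _ (iY2p _))); last first.
  by apply: filterS (H5 true) => w h Pw; case: (h Pw).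
rewrite (@cond_exp_fun _ _ _ _ Y1 (Y1p true) (evt P 1) (mPe _) (mi _ iY1) (mi _ (iY1p _))); last first.
  by apply: filterS (H5 true) => w h Pw; case: (h Pw).
rewrite (@cond_exp_fun _ _ _ _ Y2 (Y2p false) (evt P 0) (mPe _) (mi _ iY2) (mi _ (iY2p _))); last first.
  by apply: filterS (H5 false) => w h Pw; case: (h Pw).
rewrite (@cond_exp_fun _ _ _ _ Y1 (Y1p false) (evt P 0) (mPe _) (mi _ iY1) (mi _ (iY1p _))); last first.
  by apply: filterS (H5 false) => w h Pw; case: (h Pw).
have cB : forall (X Y : T -> R) v, Pr.-integrable setT (EFin \o X) ->
    Pr.-integrable setT (EFin \o Y) ->
    cond_exp Pr (X \- Y) (evt P v) = cond_exp Pr X (evt P v) - cond_exp Pr Y (evt P v).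
  by move=> X Y v; exact: cond_expB (mPe v).
move: H4; rewrite !(cB _ _ _ (iY2p false) (iY1p false)) => H4.
rewrite (cB _ _ _ (iY2p true) (iY2p false)) H3.
lra.
Qed.
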